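(* Let $\mathfrak a=\mathbb H^p$ and $V=\mathrm{Span}(J_1,J_2)$ with $J_1=\mathrm{diag}(L_{a_1},\dots,L_{a_p})$, $J_2=\mathrm{diag}(L_{b_1},\dots,L_{b_p})$, where $a_s,b_s\in\mathrm{Im}\,\mathbb H$ are linearly independent for each $s$. Then for every inner product on $V$, $(V,\langle\cdot,\cdot\rangle)$ is a WS-pair. More precisely, there is $P=\mathrm{diag}(L_{q_1},\dots,L_{q_p})$ with unit $q_s\in \mathrm{Im}\,\mathbb H$ such that $PJP^{-1}=-J$ for all $J\in V$, and for every $X\in\mathfrak a$ there is $Q=\mathrm{diag}(R_{r_1},\dots,R_{r_p})$ with unit $r_s\in\mathbb H$ such that $N=QP$ satisfies $NX=-X$ and $NJ=-JN$ for all $J\in V$.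
   Context: $\mathbb H$ denotes the quaternions with standard inner product, $L_q,R_q$ left and right multiplication by $q$, and $\mathrm{diag}$ denotes block-diagonal operators on $\mathbb H^p$ acting coordinatewise. For a Euclidean space $\mathfrak a$, a subspace $V\subset\mathfrak{so}(\mathfrak a)$ with inner product $\langle\cdot,\cdot\rangle$ defines the metric 2-step nilpotent Lie algebra $\mathfrak n=V\oplus\mathfrak a$ (orthogonal sum, $V$ central, $\langle J,[X,Y]\rangle=\langle JX,Y\rangle$). It is a WS-pair if the corresponding simply connected nilpotent Lie group with left-invariant metric is weakly symmetric. Standing fact: this holds iff for every $J\in V$, $X\in\mathfrak a$ there is $N\in\mathcal N(V)=\{N\in O(\mathfrak a): NVN^{-1}\subset V$, $K\mapsto NKN^{-1}$ orthogonal on $(V,\langle\cdot,\cdot\rangle)\}$ with $NX=-X$, $NJ=-JN$. *)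

(* Defs.v *)
From mathcomp Require Import all_boot all_order all_algebra.
From mathcomp Require Import reals.
Set Implicit Arguments. Unset Strict Implicit. Unset Printing Implicit Defensive.
Import Order.TTheory GRing.Theory Num.Theory.
Local Open Scope ring_scope.

Section Quaternions.
Variable R : realType.

Record quat := Quat { qre : R; qi : R; qj : R; qk : R }.

Definition qadd (x y : quat) : quat :=
  Quat (qre x + qre y) (qi x + qi y) (qj x + qj y) (qk x + qk y).
Definition qopp (x : quat) : quat := Quat (- qre x) (- qi x) (- qj x) (- qk x).
Definition qscale (c : R) (x : quat) : quat :=
  Quat (c * qre x) (c * qi x) (c * qj x) (c * qk x).
Definition qzero : quat := Quat 0 0 0 0.

Definition qmul (x y : quat) : quat :=
  Quat (qre x * qre y - qi x * qi y - qj x * qj y - qk x * qk y)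
       (qre x * qi y + qi x * qre y + qj x * qk y - qk x * qj y)
       (qre x * qj y - qi x * qk y + qj x * qre y + qk x * qi y)
       (qre x * qk y + qi x * qj y - qj x * qi y + qk x * qre y).

Definition qdot (x y : quat) : R :=
  qre x * qre y + qi x * qi y + qj x * qj y + qk x * qk y.
Definition qnorm2 (x : quat) : R := qdot x x.

Definition qconj (x : quat) : quat := Quat (qre x) (- qi x) (- qj x) (- qk x).
Definition qinv (x : quat) : quat := qscale (qnorm2 x)^-1 (qconj x).

Definition is_imag (x : quat) : Prop := qre x = 0.
Definition is_unit_quat (x : quat) : Prop := qnorm2 x = 1.

Definition lin_indep2 (a b : quat) : Prop :=
  forall c d : R, qadd (qscale c a) (qscale d b) = qzero -> c = 0 /\ d = 0.

Definition Hp (p : nat) := 'I_p -> quat.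
Definition Hp_dot p (x y : Hp p) : R := \sum_(s < p) qdot (x s) (y s).
Definition op (p : nat) := Hp p -> Hp p.

Definition diagL p (q : 'I_p -> quat) : op p := fun x s => qmul (q s) (x s).
Definition diagR p (r : 'I_p -> quat) : op p := fun x s => qmul (x s) (r s).

Definition op_comb p (c1 : R) (A : op p) (c2 : R) (B : op p) : op p :=
  fun x s => qadd (qscale c1 (A x s)) (qscale c2 (B x s)).
Definition op_eq p (A B : op p) : Prop := forall x s, A x s = B x s.

Definition in_span2 p (J1 J2 : op p) (J : op p) : Prop :=
  exists c1 c2 : R, op_eq J (op_comb c1 J1 c2 J2).

(** An inner product on the subspace V (given by the predicate inV):
    symmetric, bilinear on V, positive definite on V, and depending
    only on the operators extensionally. *)
Definition inner_product_on p (inV : op p -> Prop) (ip : op p -> op p -> R)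
  : Prop :=
  (forall A B A' B', inV A -> inV B -> op_eq A A' -> op_eq B B' ->
     ip A B = ip A' B') /\
  (forall A B, inV A -> inV B -> ip A B = ip B A) /\
  (forall c1 c2 A B C, inV A -> inV B -> inV C ->
     ip (op_comb c1 A c2 B) C = c1 * ip A C + c2 * ip B C) /\
  (forall A, inV A -> 0 <= ip A A) /\
  (forall A, inV A -> ip A A = 0 -> op_eq A (fun _ _ => qzero)).

Definition orthogonal_with_inv p (N Ninv : op p) : Prop :=
  (forall c1 c2 x y s,
     N (fun t => qadd (qscale c1 (x t)) (qscale c2 (y t))) s
     = qadd (qscale c1 (N x s)) (qscale c2 (N y s))) /\
  (forall x y, Hp_dot (N x) (N y) = Hp_dot x y) /\
  (forall x s, N (Ninv x) s = x s) /\
  (forall x s, Ninv (N x) s = x s).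

Definition conj_op p (N Ninv K : op p) : op p := fun x => N (K (Ninv x)).

Definition in_NV p (inV : op p -> Prop) (ip : op p -> op p -> R) (N : op p)
  : Prop :=
  exists Ninv : op p,
    orthogonal_with_inv N Ninv /\
    (forall K, inV K -> inV (conj_op N Ninv K)) /\
    (forall K L, inV K -> inV L ->
       ip (conj_op N Ninv K) (conj_op N Ninv L) = ip K L).

(** WS-pair, via the standing criterion of the paper: for every J in V and
    X in a there is N in N(V) with N X = -X and N J = -J N. *)
Definition WS_pair p (inV : op p -> Prop) (ip : op p -> op p -> R) : Prop :=
  forall (J : op p) (X : Hp p), inV J ->
    exists N : op p, in_NV inV ip N /\
      (forall s, N X s = qopp (X s)) /\
      (forall x s, N (J x) s = qopp (J (N x) s)).

End Quaternions.

(* Main.v *)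
Require Import Defs.
From mathcomp Require Import all_boot all_order all_algebra.
From mathcomp Require Import reals.
From mathcomp Require Import ring lra.
Import Order.TTheory GRing.Theory Num.Theory.
Local Open Scope ring_scope.
Set Implicit Arguments. Unset Strict Implicit. Unset Printing Implicit Defensive.

Section Helpers.
Variable R : realType.
Implicit Types x y z q v : quat R.

Definition qone : quat R := Quat 1 0 0 0.

Lemma qext x y : qre x = qre y -> qi x = qi y -> qj x = qj y -> qk x = qk y -> x = y.
Proof. by case: x => ????; case: y => ???? /= -> -> -> ->. Qed.

Ltac qsolve := apply: qext; rewrite /= ?/qmul ?/qadd ?/qscale ?/qopp ?/qconj /=; ring.

Lemma qmulA x y z : qmul x (qmul y z) = qmul (qmul x y) z.
Proof. case: x y z => [????] [????] [????]; qsolve. Qed.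

Lemma qmulNl x y : qmul (qopp x) y = qopp (qmul x y).
Proof. case: x y => [????] [????]; qsolve. Qed.
Lemma qmulNr x y : qmul x (qopp y) = qopp (qmul x y).
Proof. case: x y => [????] [????]; qsolve. Qed.
Lemma qmul1l x : qmul qone x = x.
Proof. case: x => [????]; qsolve. Qed.
Lemma qmul1r x : qmul x qone = x.
Proof. case: x => [????]; qsolve. Qed.
Lemma qmul0r x : qmul x (qzero R) = (qzero R).
Proof. case: x => [????]; qsolve. Qed.
Lemma qmul0l x : qmul (qzero R) x = (qzero R).
Proof. case: x => [????]; qsolve. Qed.
Lemma qoppK x : qopp (qopp x) = x.
Proof. case: x => [????]; qsolve. Qed.
Lemma qopp0 : qopp (qzero R) = (qzero R).
Proof. qsolve. Qed.

Lemma qmul_combl c1 c2 x y z :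
  qadd (qscale c1 (qmul x z)) (qscale c2 (qmul y z))
  = qmul (qadd (qscale c1 x) (qscale c2 y)) z.
Proof. case: x y z => [????] [????] [????]; qsolve. Qed.

Lemma qnorm2M x y : qnorm2 (qmul x y) = qnorm2 x * qnorm2 y.
Proof. case: x y => [????] [????]; rewrite /qnorm2 /qdot /=; ring. Qed.

Lemma qdotMl q x y : qdot (qmul q x) (qmul q y) = qnorm2 q * qdot x y.
Proof. case: q x y => [????] [????] [????]; rewrite /qnorm2 /qdot /=; ring. Qed.
Lemma qdotMr r x y : qdot (qmul x r) (qmul y r) = qdot x y * qnorm2 r.
Proof. case: r x y => [????] [????] [????]; rewrite /qnorm2 /qdot /=; ring. Qed.

Lemma qnorm2_eq0 x : qnorm2 x = 0 -> x = (qzero R).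
Proof.
case: x => a b c d; rewrite /qnorm2 /qdot /= => h.
apply: qext => /=; nra.
Qed.

Lemma qinvP x : qnorm2 x != 0 ->
  qmul x (qinv x) = qone /\ qmul (qinv x) x = qone.
Proof.
case: x => a b c d; rewrite /qinv /qnorm2 /qdot /= => hn.
set n := _ + _ + _ + _ in hn *.
have e : n^-1 * n = 1 by rewrite mulVf.
split; apply: qext; rewrite /= -?e /n; ring.
Qed.

Lemma qnorm2_inv x : qnorm2 x != 0 -> qnorm2 (qinv x) = (qnorm2 x)^-1.
Proof.
case: x => a b c d; rewrite /qinv /qnorm2 /qdot /= => hn.
set n := _ + _ + _ + _ in hn *.
have e : n^-1 * n = 1 by rewrite mulVf.
transitivity (n^-1 * n^-1 * n); first by rewrite /n; ring.
by rewrite -mulrA e mulr1.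
Qed.

Lemma qanti q v : is_imag q -> is_imag v -> qdot q v = 0 ->
  qmul q v = qopp (qmul v q).
Proof.
case: q v => [a b c d] [a' b' c' d']; rewrite /is_imag /qdot /= => -> -> h.
apply: qext => /=; rewrite ?mul0r ?mulr0 ?subr0 ?add0r ?addr0; lra.
Qed.

Lemma qnorm2_one : qnorm2 qone = 1.
Proof. rewrite /qnorm2 /qdot /=; ring. Qed.

Lemma unit_inv x : is_unit_quat x ->
  qmul x (qinv x) = qone /\ qmul (qinv x) x = qone.
Proof. by move=> h; apply: qinvP; rewrite h oner_neq0. Qed.

Lemma qsq q : is_imag q -> is_unit_quat q -> qmul q q = qopp qone.
Proof.
case: q => a b c d; rewrite /is_imag /is_unit_quat /qnorm2 /qdot /= => -> h.
apply: qext => /=; lra.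
Qed.

Lemma qconj_lem q v x : is_imag q -> is_unit_quat q -> is_imag v -> qdot q v = 0 ->
  qmul q (qmul v (qmul (qinv q) x)) = qopp (qmul v x).
Proof.
move=> hq uq hv hd.
rewrite qmulA (qanti hq hv hd) qmulNl -!qmulA [qmul q (qmul _ _)]qmulA.
by rewrite (unit_inv uq).1 qmul1l.
Qed.

Lemma qlin q r c1 c2 x y :
  qmul (qmul q (qadd (qscale c1 x) (qscale c2 y))) r
  = qadd (qscale c1 (qmul (qmul q x) r)) (qscale c2 (qmul (qmul q y) r)).
Proof. case: q r x y => [????] [????] [????] [????]; qsolve. Qed.

Lemma qopp_comb c1 c2 x y :
  qopp (qadd (qscale c1 x) (qscale c2 y)) = qadd (qscale (-c1) x) (qscale (-c2) y).
Proof. case: x y => [????] [????]; qsolve. Qed.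

Lemma qneg_comb (u : quat R) : qadd (qscale (-1) u) (qscale 0 u) = qopp u.
Proof. case: u => [????]; qsolve. Qed.

Definition cross x y : quat R :=
  Quat 0 (qj x * qk y - qk x * qj y) (qk x * qi y - qi x * qk y)
         (qi x * qj y - qj x * qi y).

Lemma cross_nz x y : is_imag x -> is_imag y -> lin_indep2 x y ->
  qnorm2 (cross x y) != 0.
Proof.
move=> hx hy hl; apply/negP => /eqP /qnorm2_eq0 h0.
have h1 : qj x * qk y - qk x * qj y = 0 by move: (f_equal (@qi R) h0).
have h2 : qk x * qi y - qi x * qk y = 0 by move: (f_equal (@qj R) h0).
have h3 : qi x * qj y - qj x * qi y = 0 by move: (f_equal (@qk R) h0).
have /hl [_ hd] : qadd (qscale (qdot x y) x) (qscale (- qnorm2 x) y) = qzero R.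
  move: hx hy h1 h2 h3; clear hl h0; case: x => a1 a2 a3 a4; case: y => b1 b2 b3 b4.
  rewrite /is_imag /qnorm2 /qdot /= => -> -> h1 h2 h3.
  apply: qext => /=.
  - ring.
  - transitivity (a3 * (a2 * b3 - a3 * b2) - a4 * (a4 * b2 - a2 * b4)); first ring.
    by rewrite h3 h2; ring.
  - transitivity (a4 * (a3 * b4 - a4 * b3) - a2 * (a2 * b3 - a3 * b2)); first ring.
    by rewrite h1 h3; ring.
  - transitivity (a2 * (a4 * b2 - a2 * b4) - a3 * (a3 * b4 - a4 * b3)); first ring.
    by rewrite h1 h2; ring.
have x0 : x = qzero R by apply: qnorm2_eq0; rewrite -[qnorm2 x]opprK hd oppr0.
have /hl [] : qadd (qscale 1 x) (qscale 0 y) = qzero R.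
  by rewrite x0; apply: qext => /=; ring.
by move=> /eqP; rewrite oner_eq0.
Qed.

End Helpers.

Theorem mainTheorem3 (R : realType) (p : nat) (a b : 'I_p -> quat R)
  (ha : forall s, is_imag (a s)) (hb : forall s, is_imag (b s))
  (hab : forall s, lin_indep2 (a s) (b s))
  (ip : op R p -> op R p -> R)
  (hip : inner_product_on (in_span2 (diagL a) (diagL b)) ip) :
  WS_pair (in_span2 (diagL a) (diagL b)) ip /\
  exists q : 'I_p -> quat R,
    (forall s, is_imag (q s) /\ is_unit_quat (q s)) /\
    (forall J, in_span2 (diagL a) (diagL b) J ->
       forall x s, diagL q (J (diagL (fun t => qinv (q t)) x)) s
                   = qopp (J x s)) /\
    (forall X : Hp R p, exists r : 'I_p -> quat R,
       (forall s, is_unit_quat (r s)) /\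
       (forall s, diagR r (diagL q X) s = qopp (X s)) /\
       (forall J, in_span2 (diagL a) (diagL b) J ->
          forall x s, diagR r (diagL q (J x)) s
                      = qopp (J (diagR r (diagL q x)) s))).
Proof.
set V := in_span2 (diagL a) (diagL b).
case: hip => hext [hsym [hlin [_ _]]].
pose w s := cross (a s) (b s).
pose q s := qscale (Num.sqrt (qnorm2 (w s)))^-1 (w s).
have hq : forall s, is_imag (q s) /\ is_unit_quat (q s).
  move=> s; have nz := cross_nz (ha s) (hb s) (hab s).
  have n0 : 0 <= qnorm2 (w s).
    rewrite /qnorm2 /qdot; case: (w s) => ????; rewrite /=.
    nra.
  split; first by rewrite /is_imag /q /= mulr0.
  rewrite /is_unit_quat /q.
  have -> : forall k (u : quat R), qnorm2 (qscale k u) = k ^+ 2 * qnorm2 u.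
    by move=> k [????]; rewrite /qnorm2 /qdot /=; ring.
  by rewrite exprVn sqr_sqrtr // mulVf.
have hqo : forall s c1 c2, qdot (q s) (qadd (qscale c1 (a s)) (qscale c2 (b s))) = 0.
  move=> s c1 c2; rewrite /q /w /cross.
  move: (ha s) (hb s); case: (a s) => ????; case: (b s) => ????.
  rewrite /is_imag /qdot /= => -> ->; ring.
have Jf : forall J, V J -> exists v : 'I_p -> quat R,
    (forall s, is_imag (v s) /\ qdot (q s) (v s) = 0) /\
    forall y s, J y s = qmul (v s) (y s).
  move=> J [c1 [c2 HJ]].
  exists (fun s => qadd (qscale c1 (a s)) (qscale c2 (b s))); split.
    move=> s; split; last exact: hqo.
    by rewrite /is_imag /= (ha s) (hb s) !mulr0 addr0.
  by move=> y s; rewrite HJ /op_comb /diagL qmul_combl.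
pose rX (X : Hp R p) s := if qnorm2 (X s) == 0 then qone R
  else qmul (qinv (X s)) (qmul (q s) (X s)).
have hr : forall X s, is_unit_quat (rX X s) /\
    qmul (qmul (q s) (X s)) (rX X s) = qopp (X s).
  move=> X s; rewrite /rX; case: eqP => [/qnorm2_eq0 ->|/eqP nz].
    by rewrite /is_unit_quat qnorm2_one qmul0r qmul1r qopp0.
  have [hqi hqu] := hq s.
  split.
    rewrite /is_unit_quat !qnorm2M qnorm2_inv // hqu mul1r mulVf //.
  rewrite -qmulA [qmul (X s) _]qmulA ((qinvP nz).1) qmul1l qmulA qsq //.
  by rewrite qmulNl qmul1l.
have key : forall X J, V J -> forall x s,
    qmul (qmul (q s) (J x s)) (rX X s) = qopp (J (fun t => qmul (qmul (q t) (x t)) (rX X t)) s).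
  move=> X J /Jf [v [hv HJ]] x s; rewrite !HJ.
  have [hvi hvo] := hv s.
  by rewrite qmulA (qanti (hq s).1 hvi hvo) !qmulNl !qmulA.
have conjq : forall J, V J -> forall x s,
    qmul (q s) (J (fun t => qmul (qinv (q t)) (x t)) s) = qopp (J x s).
  move=> J /Jf [v [hv HJ]] x s; rewrite !HJ.
  have [hvi hvo] := hv s.
  by apply: qconj_lem => //; case: (hq s).
split; last first.
  exists q; split => //; split; first exact: conjq.
  move=> X; exists (rX X); split; first by move=> s; case: (hr X s).
  split; first by move=> s; case: (hr X s).
  exact: key.
move=> J X HJ.
exists (fun x s => qmul (qmul (q s) (x s)) (rX X s)); split; last first.
  split; first by move=> s; case: (hr X s).
  exact: key.
pose Ninv (x : Hp R p) s := qmul (qinv (q s)) (qmul (x s) (qinv (rX X s))).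
exists Ninv.
have hNinv : forall x s, qmul (qmul (q s) (Ninv x s)) (rX X s) = x s.
  move=> x s; rewrite /Ninv qmulA ((unit_inv (hq s).2).1) qmul1l -qmulA.
  by rewrite ((unit_inv (hr X s).1).2) qmul1r.
have hconj : forall K, V K -> forall x s,
    conj_op (fun x s => qmul (qmul (q s) (x s)) (rX X s)) Ninv K x s = qopp (K x s).
  move=> K hK x s; rewrite /conj_op.
  have [v [hv HK]] := Jf K hK.
  have [hvi hvo] := hv s.
  rewrite !HK /Ninv qmulA (qanti (hq s).1 hvi hvo) qmulNl -!qmulA.
  rewrite [qmul (q s) (qmul _ _)]qmulA ((unit_inv (hq s).2).1) qmul1l.
  by rewrite qmulNl -!qmulA ((unit_inv (hr X s).1).2) qmul1r.
pose negop (K : op R p) : op R p := op_comb (-1) K 0 K.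
have negV : forall K, V K -> V (negop K).
  move=> K [c1 [c2 HK]]; exists (-c1), (-c2) => x s.
  by rewrite /negop /op_comb qneg_comb HK qopp_comb.
have negip : forall K C, V K -> V C -> ip (negop K) C = - ip K C.
  move=> K C hK hC; rewrite /negop hlin //; ring.
have conjneg : forall K, V K -> op_eq (conj_op (fun x s => qmul (qmul (q s) (x s)) (rX X s)) Ninv K) (negop K).
  by move=> K hK x s; rewrite hconj // /negop /op_comb qneg_comb.
have conjV : forall K, V K -> V (conj_op (fun x s => qmul (qmul (q s) (x s)) (rX X s)) Ninv K).
  move=> K hK; have [c1 [c2 HK]] := negV K hK; exists c1, c2 => x s.
  by rewrite conjneg.
split; [split; [|split; [|split]]|split] => //.
- by move=> c1 c2 x y s; rewrite qlin.
- move=> x y; rewrite /Hp_dot; apply: eq_bigr => s _.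
  by rewrite qdotMr qdotMl (hq s).2 (hr X s).1 mul1r mulr1.
- move=> x s; rewrite /Ninv -qmulA ((unit_inv (hr X s).1).1) qmul1r qmulA.
  by rewrite ((unit_inv (hq s).2).2) qmul1l.
- move=> K L hK hL.
  rewrite (hext _ _ (negop K) (negop L) (conjV K hK) (conjV L hL) (conjneg K hK) (conjneg L hL)).
  rewrite negip //; last exact: negV.
  rewrite hsym //; last exact: negV.
  by rewrite negip // opprK hsym.
Qed.
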